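(* Let $\mathbf{Q}^\star,\mathbf{Q},\mathbf{Q}_r,\mathbf{H}$ be as in the context, let $\lambda_j^\star$ be the $j$-th eigenvalue of $\mathbf{Q}^\star$, and $\delta^\star=\min\{\min_{j\in[r-1]}|\lambda_j^\star-\lambda_{j+1}^\star|,\ \lambda_r^\star\}$. If $\mathbf{H}$ is Hermitian, then $$\|\mathbf{Q}^\star-\mathbf{Q}_r\|_2\le O\!\left(\lambda_{r+1}^\star+\frac{\lambda_1^\star}{\delta^\star}\|\mathbf{H}\|_2\right).$$
   Context: $\mathbf{Q}^\star\in\mathbb{C}^{n\times n}$ is Hermitian positive semi-definite of rank $r^\star$ with eigenvalues $\lambda_1^\star\ge\lambda_2^\star\ge\dots\ge 0$ (zero beyond the rank). $\mathbf{H}\in\mathbb{C}^{n\times n}$, $\mathbf{Q}=\mathbf{Q}^\star+\mathbf{H}$, and $\mathbf{Q}_r=\mathbf{V}_r\boldsymbol{\Sigma}_r\mathbf{V}_r^\dagger$ with $\boldsymbol{\Sigma}_r$ the top-$r$ singular values of $\mathbf{Q}$ and $\mathbf{V}_r$ the corresponding left singular vectors. $\|\cdot\|_2$ is the spectral norm; $O(\cdot)$ hides an absolute constant. *)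

(* Defs.v *)
From HB Require Import structures.
From mathcomp Require Import all_boot all_order all_algebra.
From mathcomp Require Import complex.
From mathcomp Require Import classical_sets reals.
Set Implicit Arguments. Unset Strict Implicit. Unset Printing Implicit Defensive.
Import Order.TTheory GRing.Theory Num.Theory.
Local Open Scope ring_scope.
Local Open Scope sesquilinear_scope.
Local Open Scope classical_set_scope.

Section Defs.
Variable R : realType.
Local Notation C := (R[i])%C.

Definition psdmx {n} (A : 'M[C]_n) : Prop :=
  A \is hermsymmx /\ forall u : 'cV[C]_n, 0 <= (u ^t* *m A *m u) 0 0.

Definition rdiag {n} (d : nat -> R) : 'M[C]_n :=
  diag_mx (\row_(i < n) ((d i)%:C)%C).

Definition vnorm {n} (u : 'cV[C]_n) : R :=
  Num.sqrt (\sum_(i < n) (ComplexField.Normc.normc (u i 0)) ^+ 2).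

Definition spnorm {n} (A : 'M[C]_n) : R :=
  sup [set x : R | exists u : 'cV[C]_n, vnorm u = 1 /\ x = vnorm (A *m u)].

(* lam k (k = 0, 1, ...) is lambda_{k+1}: the eigenvalues of the Hermitian
   matrix A counted with multiplicity, in non-increasing order
   (A = U diag(lam 0, ..., lam (n-1)) U^dagger with U unitary),
   extended by 0 beyond n *)
Definition eigen_seq {n} (A : 'M[C]_n) (lam : nat -> R) : Prop :=
  (exists U : 'M[C]_n, U \is unitarymx /\ A = U *m rdiag lam *m U ^t*) /\
  (forall i j, (i <= j < n)%N -> lam j <= lam i) /\
  (forall k, (n <= k)%N -> lam k = 0).

Definition svd {n} (Q V W : 'M[C]_n) (sigma : nat -> R) : Prop :=
  V \is unitarymx /\ W \is unitarymx /\
  (forall i, (i < n)%N -> 0 <= sigma i) /\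
  (forall i j, (i <= j < n)%N -> sigma j <= sigma i) /\
  Q = V *m rdiag sigma *m W ^t*.

(* Q_r = V_r Sigma_r V_r^dagger, written as V diag(sigma_1..sigma_r,0..0) V^dagger *)
Definition trunc_r {n} (V : 'M[C]_n) (sigma : nat -> R) (r : nat) : 'M[C]_n :=
  V *m rdiag (fun i => if (i < r)%N then sigma i else 0) *m V ^t*.

(* delta* = min( min_{j in [r-1]} |lambda_j - lambda_{j+1}|, lambda_r ),
   with 0-indexed lam (lambda_j = lam (j-1)) *)
Definition delta_star (lam : nat -> R) (r : nat) : R :=
  \big[Order.min/lam r.-1]_(k < r.-1) `|lam k - lam k.+1|.

End Defs.

(* Main.v *)
Require Import Defs.
From HB Require Import structures.
From mathcomp Require Import all_boot all_order all_algebra.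
From mathcomp Require Import complex ring lra.
From mathcomp Require Import classical_sets reals.
Import Order.TTheory GRing.Theory Num.Theory.
Local Open Scope ring_scope.
Local Open Scope sesquilinear_scope.
Set Implicit Arguments. Unset Strict Implicit. Unset Printing Implicit Defensive.

Section G.
Variable C : numClosedFieldType.

Definition nn {n} (x : 'cV[C]_n) : C := (x^t* *m x) 0 0.

Lemma nnE n (x : 'cV[C]_n) : nn x = \sum_k `|x k 0| ^+ 2.
Proof.
rewrite /nn mxE; apply: eq_bigr => k _; rewrite !mxE normCK mulrC.
by [].
Qed.

Lemma nn_ge0 n (x : 'cV[C]_n) : 0 <= nn x.
Proof. by rewrite nnE; apply: sumr_ge0 => k _; rewrite exprn_ge0. Qed.

Lemma nn_eq0 n (x : 'cV[C]_n) : nn x = 0 -> x = 0.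
Proof.
rewrite nnE => /eqP; rewrite psumr_eq0 => [/allP H|k _]; last by rewrite exprn_ge0.
apply/matrixP => i j; rewrite ord1 mxE.
have /H := mem_index_enum i; rewrite /= sqrf_eq0 normr_eq0 => /eqP //.
Qed.

Lemma nnN n (x : 'cV[C]_n) : nn (- x) = nn x.
Proof. by rewrite !nnE; apply: eq_bigr => k _; rewrite mxE normrN. Qed.

Lemma nnZ n (a : C) (x : 'cV[C]_n) : nn (a *: x) = `|a| ^+ 2 * nn x.
Proof.
rewrite !nnE mulr_sumr; apply: eq_bigr => k _; rewrite mxE normrM exprMn //.
Qed.

Lemma sqr_normD2 (a b : C) : `|a + b| ^+ 2 <= 2%:R * `|a| ^+ 2 + 2%:R * `|b| ^+ 2.
Proof.
have E : 2%:R * `|a| ^+ 2 + 2%:R * `|b| ^+ 2 = `|a + b| ^+ 2 + `|a - b| ^+ 2.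
  rewrite !normCK !rmorphD !rmorphN /=; ring.
by rewrite E lerDl exprn_ge0.
Qed.


Lemma nnD2 n (a b : 'cV[C]_n) : nn (a + b) <= 2%:R * nn a + 2%:R * nn b.
Proof.
rewrite !nnE !mulr_sumr -big_split /=; apply: ler_sum => k _.
by rewrite mxE sqr_normD2.
Qed.

Lemma trC_mul m n p (A : 'M[C]_(m, n)) (B : 'M[C]_(n, p)) :
  (A *m B)^t* = B^t* *m A^t*.
Proof. by rewrite trmx_mul map_mxM. Qed.

Lemma unitary_tl n (U : 'M[C]_n) : U \is unitarymx -> U^t* *m U = 1%:M.
Proof.
by move=> hU; rewrite -trmxC_unitary in hU; move/unitarymxP: hU; rewrite trmxCK.
Qed.

Lemma unitary_tr n (U : 'M[C]_n) : U \is unitarymx -> U *m U^t* = 1%:M.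
Proof. by move/unitarymxP. Qed.

Lemma nn_unitary n (U : 'M[C]_n) (x : 'cV[C]_n) :
  U \is unitarymx -> nn (U *m x) = nn x.
Proof.
move=> hU; rewrite /nn trC_mul mulmxA -[_ *m U^t* *m U]mulmxA unitary_tl //.
by rewrite mulmx1.
Qed.

Lemma nn_diag n (d : 'rV[C]_n) (x : 'cV[C]_n) :
  nn (diag_mx d *m x) = \sum_k `|d 0 k| ^+ 2 * `|x k 0| ^+ 2.
Proof.
rewrite nnE; apply: eq_bigr => k _; rewrite mul_diag_mx mxE normrM exprMn //.
Qed.


Lemma herm_tC n (T : 'M[C]_n) : T \is hermsymmx -> T^t* = T.
Proof. by move/is_hermitianmxP => {2}->; rewrite expr0 scale1r. Qed.

Lemma tC_herm n (T : 'M[C]_n) : T^t* = T -> T \is hermsymmx.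
Proof. by move=> h; apply/is_hermitianmxP; rewrite expr0 scale1r h. Qed.

Lemma trig_herm_diag n (P T : 'M[C]_n) : P \is unitarymx -> T \is hermsymmx ->
  similar_trig P T -> P *m T *m P^t* = diag_mx (\row_i (P *m T *m P^t*) i i).
Proof.
move=> hP hT; rewrite /similar_to conjumx ?unitarymx_unit // invmx_unitary //.
set M := P *m T *m P^t* => /is_trig_mxP Mtr.
have MH : M^t* = M by rewrite /M !trC_mul trmxCK herm_tC // mulmxA.
clearbody M.
apply/matrixP => i j; rewrite [RHS]mxE [in RHS]mxE.
case: (ltngtP i j) => [lt|gt|eq].
- rewrite Mtr //; case: eqP => // e; by move: lt; rewrite e ltnn.
- have : M i j = (M^t*) i j by rewrite MH.
  rewrite !mxE (Mtr j i gt) conjC0 => ->; case: eqP => // e; by move: gt; rewrite e ltnn.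
- have -> : j = i by apply/val_inj.
  by rewrite eqxx mulr1n.
Qed.


Lemma diag_herm n (dd : 'rV[C]_n) : (forall k, 0 <= dd 0 k) ->
  diag_mx dd \is hermsymmx.
Proof.
move=> h; apply: tC_herm; rewrite tr_diag_mx map_diag_mx; congr diag_mx.
by apply/matrixP => i j; rewrite ord1 mxE; exact: geC0_conj.
Qed.

Lemma nn_delta n (i : 'I_n) : nn (delta_mx i 0 : 'cV[C]_n) = 1.
Proof.
by rewrite /nn trmx_delta map_delta_mx mul_delta_mx mxE !eqxx.
Qed.

Lemma diag_delta n (s : 'rV[C]_n) (i : 'I_n) :
  diag_mx s *m delta_mx i 0 = s 0 i *: (delta_mx i 0 : 'cV[C]_n).
Proof.
apply/matrixP => a b; rewrite mul_diag_mx !mxE.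
by case: eqP => [->|_]; rewrite ?mulr0 ?mul0r ?andFb ?mulr1.
Qed.

Lemma key n (S : 'M[C]_n) (dd : 'rV[C]_n) (e : C) :
  S \is hermsymmx -> (forall k, 0 <= dd 0 k) -> 0 <= e ->
  S *m S = diag_mx dd *m diag_mx dd ->
  (forall (f : 'cV[C]_n) (s : C), nn f = 1 -> S *m f = s *: f -> - e <= s) ->
  forall x, nn ((diag_mx dd - S) *m x) <= 4%:R * e ^+ 2 * nn x.
Proof.
move=> SH dd0 e0 SS hneg x.
set D := diag_mx dd.
have DH : D \is hermsymmx by apply: diag_herm.
have comm : S *m D = D *m S.
  have h2 : S *m (D *m D) = (D *m D) *m S by rewrite -SS mulmxA.
  apply/matrixP => i j; rewrite mul_mx_diag mul_diag_mx !mxE.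
  move/matrixP: h2 => /(_ i j).
  rewrite /D mulmx_diag mul_mx_diag mul_diag_mx !mxE.
  have [->|nz] := eqVneq (S i j) 0; first by move=> _; rewrite mul0r mulr0.
  move=> h; have h' : dd 0 i ^+ 2 = dd 0 j ^+ 2.
    by apply: (mulIf nz); rewrite !expr2 -h mulrC.
  by move/eqP: h'; rewrite eqrXn2 // => /eqP ->; rewrite mulrC.
have [P hP /andP[tS tD]] := cotrigonalization2 comm.
have eS := trig_herm_diag hP SH tS; have eD := trig_herm_diag hP DH tD.
move: eS eD.
set s := \row_i (P *m S *m P^t*) i i; set d := \row_i (P *m D *m P^t*) i i.
move=> eS eD.
have PtP := unitary_tl hP; have PPt := unitary_tr hP.
have SP : S *m P^t* = P^t* *m diag_mx s.
  by rewrite -eS !mulmxA PtP mul1mx.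
have d0 : forall i, 0 <= d 0 i.
  move=> i; rewrite /d mxE mxE; apply: sumr_ge0 => k _.
  rewrite /D mul_mx_diag !mxE mulrAC -normCK.
  by rewrite mulr_ge0 // exprn_ge0.
have sd : forall i, s 0 i ^+ 2 = d 0 i ^+ 2.
  move=> i.
  have : diag_mx s *m diag_mx s = diag_mx d *m diag_mx d.
    rewrite -eS -eD !mulmxA -[_ *m P^t* *m P]mulmxA PtP mulmx1.
    rewrite -[_ *m P^t* *m P]mulmxA PtP mulmx1 -(mulmxA P S S) SS.
    by rewrite !mulmxA.
  rewrite !mulmx_diag => /matrixP /(_ i i); rewrite !mxE !eqxx !mulr1n.
  by rewrite !expr2.
have sge : forall i, - e <= s 0 i.
  move=> i; apply: (hneg (P^t* *m delta_mx i 0)).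
    by rewrite nn_unitary ?trmxC_unitary // nn_delta.
  by rewrite mulmxA SP -mulmxA diag_delta -scalemxAr.
have dsb : forall i, `|d 0 i - s 0 i| <= 2%:R * e.
  move=> i; have := sd i; move/eqP; rewrite -subr_eq0 subr_sqr mulf_eq0.
  case/orP; rewrite ?subr_eq0 ?addr_eq0 => /eqP hs; rewrite hs.
    by rewrite subrr normr0 mulr_ge0 // ler0n.
  rewrite opprK -mulr2n normrMn ger0_norm // mulr_natl lerMn2r /=.
  by have := sge i; rewrite hs lerN2.
rewrite -(nn_unitary _ hP).
have -> : P *m ((D - S) *m x) = diag_mx (d - s) *m (P *m x).
  rewrite linearB /= -eD -eS -mulmxBl -mulmxBr -!mulmxA (mulmxA (P^t*) P x) PtP mul1mx.
  by [].
rewrite nn_diag -(nn_unitary x hP) nnE mulr_sumr; apply: ler_sum => k _.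
apply: ler_wpM2r; first exact: exprn_ge0.
have -> : 4%:R * e ^+ 2 = (2%:R * e) ^+ 2 by rewrite exprMn -natrX.
rewrite lerXn2r ?nnegrE ?mulr_ge0 ?ler0n //; first by have := dsb k; rewrite /d /s !mxE.
Qed.


Definition ip {n} (a b : 'cV[C]_n) : C := (a^t* *m b) 0 0.

Lemma ipE n (a b : 'cV[C]_n) : ip a b = \sum_k (a k 0)^* * b k 0.
Proof. by rewrite /ip mxE; apply: eq_bigr => k _; rewrite !mxE. Qed.

Lemma nn_ip n (a : 'cV[C]_n) : nn a = ip a a. Proof. by []. Qed.

Lemma ipDl n (a b c : 'cV[C]_n) : ip (a + b) c = ip a c + ip b c.
Proof. by rewrite !ipE -big_split; apply: eq_bigr => k _; rewrite mxE rmorphD mulrDl. Qed.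

Lemma ipDr n (a b c : 'cV[C]_n) : ip c (a + b) = ip c a + ip c b.
Proof. by rewrite !ipE -big_split; apply: eq_bigr => k _; rewrite mxE mulrDr. Qed.

Lemma ipZl n k (a c : 'cV[C]_n) : ip (k *: a) c = k^* * ip a c.
Proof. by rewrite !ipE mulr_sumr; apply: eq_bigr => i _; rewrite mxE rmorphM mulrA. Qed.

Lemma ipZr n k (a c : 'cV[C]_n) : ip c (k *: a) = k * ip c a.
Proof. by rewrite !ipE mulr_sumr; apply: eq_bigr => i _; rewrite mxE mulrCA. Qed.

Lemma ipNl n (a c : 'cV[C]_n) : ip (- a) c = - ip a c.
Proof. by rewrite -scaleN1r ipZl rmorphN rmorph1 mulN1r. Qed.

Lemma ipNr n (a c : 'cV[C]_n) : ip c (- a) = - ip c a.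
Proof. by rewrite -scaleN1r ipZr mulN1r. Qed.

Lemma ipC n (a b : 'cV[C]_n) : ip b a = (ip a b)^*.
Proof.
rewrite !ipE rmorph_sum; apply: eq_bigr => k _.
by rewrite rmorphM /= conjCK mulrC.
Qed.

Lemma ip_mul n (M : 'M[C]_n) (a b : 'cV[C]_n) : ip a (M *m b) = ip (M^t* *m a) b.
Proof. by rewrite /ip trC_mul trmxCK mulmxA. Qed.


Lemma hermD n (A B : 'M[C]_n) : A \is hermsymmx -> B \is hermsymmx ->
  A + B \is hermsymmx.
Proof.
by move=> hA hB; apply: tC_herm; rewrite linearD /= map_mxD !herm_tC.
Qed.

Lemma hneg_lemma n (Qs H V : 'M[C]_n) (e : C) :
  V \is unitarymx -> Qs \is hermsymmx -> H \is hermsymmx ->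
  (forall u : 'cV[C]_n, 0 <= (u^t* *m Qs *m u) 0 0) ->
  (forall x, nn (H *m x) <= e ^+ 2 * nn x) -> 0 <= e ->
  forall f s, nn f = 1 -> (V^t* *m (Qs + H) *m V) *m f = s *: f -> - e <= s.
Proof.
move=> hV hQs hH psd hb e0 f s nf eig.
set z := V *m f.
have nz : nn z = 1 by rewrite nn_unitary.
have Qz : (Qs + H) *m z = s *: z.
  have := congr1 (mulmx V) eig; rewrite !mulmxA unitary_tr // mul1mx -scalemxAr.
  by rewrite -mulmxA.
set w := Qs *m z.
have t0 : 0 <= ip z w by have := psd z; rewrite /ip /w mulmxA.
have wz : ip w z = ip z w by rewrite ipC geC0_conj.
have hQ := hermD hQs hH.
have sr : s^* = s.
  have e1 : ip z ((Qs + H) *m z) = s by rewrite Qz ipZr -nn_ip nz mulr1.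
  have e2 : ip z ((Qs + H) *m z) = ip ((Qs + H) *m z) z by rewrite (ip_mul (Qs + H) z z) herm_tC.
  by rewrite -{1}e1 -ipC -e2.
have Hz : H *m z = s *: z - w.
  by rewrite -Qz mulmxDl /w addrC addKr.
have nHz : nn (H *m z) = s * s - (s * ip z w + s * ip z w) + nn w.
  rewrite Hz nn_ip !ipDl !ipDr !ipNl !ipNr !ipZl !ipZr -!nn_ip nz sr wz.
  by rewrite mulr1 opprK opprD !addrA addrAC.
have sR : s \is Num.real by rewrite CrealE sr.
have [s0|s0] := real_leP (real0 C) sR.
  by apply: le_trans s0; rewrite oppr_le0.
have : s ^+ 2 <= e ^+ 2.
  have := hb z; rewrite nz mulr1; apply: le_trans.
  rewrite nHz expr2 -addrA lerDl.
  rewrite addr_ge0 ?nn_ge0 // oppr_ge0 -mulr2n mulrn_wle0 //.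
  by rewrite nmulr_rle0.
rewrite -(real_normK sR) (ler_pXn2r (isT : (0 < 2)%N)) ?nnegrE ?normr_ge0 //.
by rewrite (ltr0_norm s0) lerNl.
Qed.


Lemma exists_vec n (r : nat) (A : 'M[C]_n) : (r < n)%N ->
  exists2 c : 'cV[C]_n, c != 0 &
    (forall k : 'I_n, (r < k)%N -> c k 0 = 0) /\
    (forall j : 'I_n, (j < r)%N -> (A *m c) j 0 = 0).
Proof.
move=> rn.
pose M := \matrix_(k < n, j < n)
  (if (j < r)%N then A j k else ((k : nat) == j.+1)%:R).
have j0lt : (n.-1 < n)%N by rewrite ltn_predL (leq_ltn_trans (leq0n r) rn).
pose j0 := Ordinal j0lt.
have : \det M == 0.
  rewrite -det_tr; apply/det0P; exists (delta_mx 0 j0).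
    apply/eqP => /matrixP /(_ 0 j0); rewrite !mxE !eqxx /= => /eqP.
    by rewrite oner_eq0.
  rewrite -rowE; apply/matrixP => i k; rewrite !mxE /=.
  have -> : (n.-1 < r)%N = false.
    by apply/negbTE; rewrite -leqNgt -ltnS prednK // (leq_ltn_trans (leq0n r) rn).
  case: eqP => // hk; have := ltn_ord k; rewrite hk prednK ?ltnn //.
  exact: (leq_ltn_trans (leq0n r) rn).
move/det0P => [v vnz vM].
exists v^T.
  by apply: contra vnz => /eqP h; apply/eqP; rewrite -(trmxK v) h trmx0.
split.
  move=> k rk.
  have k0 : (0 < k)%N by apply: leq_ltn_trans rk.
  have jlt : (k.-1 < n)%N by rewrite (leq_ltn_trans (leq_pred k)).
  have := congr1 (fun m : 'rV[C]_n => m 0 (Ordinal jlt)) vM.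
  have nr : ((Ordinal jlt : nat) < r)%N = false.
    by apply/negbTE; rewrite -leqNgt /= -ltnS prednK.
  rewrite !mxE /= (bigD1 k) //= big1 ?addr0.
    by rewrite !mxE nr prednK // eqxx mulr1 => ->.
  move=> i ik; rewrite !mxE nr prednK //.
  case: eqP => [h|]; last by rewrite mulr0.
  have ik2 : i = k by apply/val_inj.
  by move: ik; rewrite ik2 eqxx.
move=> j jr.
have := congr1 (fun m : 'rV[C]_n => m 0 j) vM; rewrite !mxE => h; rewrite -[in RHS]h.
by apply: eq_bigr => k _; rewrite !mxE jr mulrC.
Qed.


Lemma weyl n (r : 'I_n) (Qs H Q U V W : 'M[C]_n) (lamv sg : 'rV[C]_n) (e : C) :
  U \is unitarymx -> V \is unitarymx -> W \is unitarymx ->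
  Qs = U *m diag_mx lamv *m U^t* -> Q = W *m diag_mx sg *m V^t* -> Q = Qs + H ->
  (forall k : 'I_n, (r <= k)%N -> `|lamv 0 k| <= `|lamv 0 r|) ->
  (forall k : 'I_n, (k <= r)%N -> `|sg 0 r| <= `|sg 0 k|) ->
  (forall x, nn (H *m x) <= e ^+ 2 * nn x) ->
  `|sg 0 r| ^+ 2 <= 2%:R * (`|lamv 0 r| ^+ 2 + e ^+ 2).
Proof.
move=> hU hV hW eQs eQ eQ2 hlam hsg hb.
have [c cnz [c0 Ac0]] := exists_vec (U^t* *m V) (ltn_ord r).
have nc : 0 < nn c.
  by rewrite lt_def nn_ge0 andbT; apply: contra cnz => /eqP /nn_eq0 ->.
have h1 : `|sg 0 r| ^+ 2 * nn c <= nn (Q *m (V *m c)).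
  rewrite eQ -!mulmxA (mulmxA (V^t*) V c) unitary_tl // mul1mx nn_unitary //.
  rewrite nn_diag nnE mulr_sumr; apply: ler_sum => k _.
  case: (leqP k r) => kr.
    apply: ler_wpM2r; first exact: exprn_ge0.
    by rewrite lerXn2r ?nnegrE ?normr_ge0 ?hsg.
  by rewrite c0 // normr0 expr0n /= !mulr0.
have h2 : nn (Qs *m (V *m c)) <= `|lamv 0 r| ^+ 2 * nn c.
  rewrite eQs -!mulmxA nn_unitary // (mulmxA (U^t*) V c) nn_diag.
  have hUt : U^t* \is unitarymx by rewrite trmxC_unitary.
  rewrite -(nn_unitary c hV) -(nn_unitary (V *m c) hUt) mulmxA.
  rewrite nnE mulr_sumr; apply: ler_sum => k _.
  case: (leqP r k) => kr.
    apply: ler_wpM2r; first exact: exprn_ge0.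
    by rewrite lerXn2r ?nnegrE ?normr_ge0 ?hlam.
  by rewrite Ac0 // normr0 expr0n /= !mulr0.
have h3 := nnD2 (Qs *m (V *m c)) (H *m (V *m c)).
rewrite -mulmxDl -eQ2 in h3.
have h4 := hb (V *m c); rewrite (nn_unitary c hV) in h4.
rewrite -(ler_pM2r nc); apply: le_trans h1 (le_trans h3 _).
rewrite -[2%:R * _ * nn c]mulrA [(_ + _) * nn c]mulrDl mulrDr lerD // ler_wpM2l ?ler0n //.
Qed.

End G.

Section S.
Variable R : realType.
Local Notation C := (R[i])%C.

Lemma vnorm_ge0 n (x : 'cV[C]_n) : 0 <= vnorm x.
Proof. exact: sqrtr_ge0. Qed.

Lemma vnorm_nn n (x : 'cV[C]_n) : (((vnorm x) ^+ 2)%:C)%C = nn x.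
Proof.
rewrite /vnorm sqr_sqrtr; last by apply: sumr_ge0 => k _; exact: sqr_ge0.
rewrite nnE rmorph_sum; apply: eq_bigr => k _; rewrite rmorphXn //.
Qed.


Lemma nn_le_vnorm n (y : 'cV[C]_n) (c : R) : 0 <= c -> nn y <= (((c ^+ 2)%:C)%C) -> vnorm y <= c.
Proof.
move=> c0; rewrite -vnorm_nn lecR => h.
by rewrite -(ler_pXn2r (isT : (0 < 2)%N)) ?nnegrE ?vnorm_ge0.
Qed.

Lemma vnorm_le_nn n (y : 'cV[C]_n) (c : R) : vnorm y <= c -> nn y <= (((c ^+ 2)%:C)%C).
Proof.
move=> h; rewrite -vnorm_nn lecR lerXn2r ?nnegrE ?vnorm_ge0 //.
exact: le_trans (vnorm_ge0 y) h.
Qed.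

Lemma vnorm1_nn n (u : 'cV[C]_n) : vnorm u = 1 -> nn u = 1.
Proof. by move=> h; rewrite -vnorm_nn h expr1n. Qed.

Lemma nn1_vnorm n (u : 'cV[C]_n) : nn u = 1 -> vnorm u = 1.
Proof.
rewrite -vnorm_nn => h.
have : vnorm u ^+ 2 = 1 by apply: (@complexI R); rewrite h.
by move/eqP; rewrite sqrp_eq1 ?vnorm_ge0 // => /eqP.
Qed.

Lemma coord_le1 n (u : 'cV[C]_n) j : nn u = 1 -> `|u j 0| <= 1.
Proof.
move=> h.
have : `|u j 0| ^+ 2 <= 1.
  rewrite -h nnE (bigD1 j) //= lerDl; apply: sumr_ge0 => k _; exact: exprn_ge0.
by rewrite -{1}(expr1n _ 2) ler_pXn2r ?nnegrE ?normr_ge0 ?ler01.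
Qed.

Lemma spnorm_ge n (A : 'M[C]_n) (u : 'cV[C]_n) :
  vnorm u = 1 -> vnorm (A *m u) <= spnorm A.
Proof.
move=> hu; apply: ub_le_sup; last by exists u.
pose B : R := \sum_i (\sum_j ComplexField.Normc.normc (A i j)) ^+ 2.
have B0 : 0 <= B by apply: sumr_ge0 => i _; exact: sqr_ge0.
exists (B + 1) => _ [v [hv ->]].
have : nn (A *m v) <= (B%:C)%C.
  rewrite nnE /B rmorph_sum; apply: ler_sum => i _.
  rewrite rmorphXn rmorph_sum /= lerXn2r ?nnegrE ?normr_ge0 //.
  1: by apply: sumr_ge0 => j _; have := normr_ge0 (A i j).
  rewrite mxE; apply: le_trans (ler_norm_sum _ _ _) _; apply: ler_sum => j _.
  rewrite normrM -[X in _ <= X]mulr1 ler_wpM2l ?normr_ge0 //.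
  exact: coord_le1 (vnorm1_nn hv).
rewrite -vnorm_nn lecR => h.
have := vnorm_ge0 (A *m v); nra.
Qed.

Lemma spnorm_le n (A : 'M[C]_n) (c : R) : (0 < n)%N ->
  (forall u, vnorm u = 1 -> vnorm (A *m u) <= c) -> spnorm A <= c.
Proof.
move=> n0 h; apply: ge_sup.
  exists (vnorm (A *m delta_mx (Ordinal n0) 0)); exists (delta_mx (Ordinal n0) 0).
  by split => //; apply: nn1_vnorm; exact: nn_delta.
by move=> _ [u [hu ->]]; exact: h.
Qed.


Lemma nn0 n : nn (0 : 'cV[C]_n) = 0.
Proof. by rewrite nnE big1 // => k _; rewrite mxE normr0 expr0n. Qed.

Lemma spnorm_nn n (A : 'M[C]_n) (x : 'cV[C]_n) :
  nn (A *m x) <= ((spnorm A)%:C)%C ^+ 2 * nn x.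
Proof.
have [->|xnz] := eqVneq x 0; first by rewrite mulmx0 nn0 mulr0.
set a := vnorm x.
have a0 : 0 < a.
  rewrite lt_def vnorm_ge0 andbT; apply: contra xnz => /eqP a0.
  by apply/eqP/nn_eq0; rewrite -vnorm_nn -/a a0 expr0n.
set al := ((a%:C)%C).
have al0 : 0 < al by rewrite ltcR.
have nx : nn x = al ^+ 2 by rewrite -vnorm_nn rmorphXn.
have ali : 0 <= al^-1 by rewrite invr_ge0 ltW.
pose u := al^-1 *: x.
have nu : nn u = 1.
  by rewrite nnZ nx (ger0_norm ali) -exprMn mulVf ?gt_eqF // expr1n.
have h := vnorm_le_nn (spnorm_ge A (nn1_vnorm nu)).
rewrite /u -scalemxAr nnZ (ger0_norm ali) in h.
rewrite nx.
have -> : nn (A *m x) = al ^+ 2 * (al^-1 ^+ 2 * nn (A *m x)).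
  by rewrite mulrA -exprMn divff ?gt_eqF // expr1n mul1r.
rewrite [X in _ <= X]mulrC; apply: ler_wpM2l; first by rewrite exprn_ge0 // ltW.
by rewrite -rmorphXn.
Qed.


Lemma realC_conj (a : R) : Num.conj ((a%:C)%C : C) = (a%:C)%C.
Proof.
apply: conj_Creal; have [h|h] := leP 0 a.
  by apply: ger0_real; rewrite ler0c.
by apply: ler0_real; rewrite -(rmorph0 (real_complex R)) lecR ltW.
Qed.

Lemma rdiag_tC n (d : nat -> R) : (rdiag d : 'M[C]_n)^t* = rdiag d.
Proof.
rewrite /rdiag tr_diag_mx map_diag_mx; congr diag_mx.
by apply/matrixP => i j; rewrite !mxE; exact: realC_conj.
Qed.

Lemma psd_lam n (Qs : 'M[C]_n) lam : psdmx Qs -> eigen_seq Qs lam ->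
  forall k, (k < n)%N -> 0 <= lam k.
Proof.
move=> [hQs psd] [[U [hU eQs]] _] k kn.
pose d := (delta_mx (Ordinal kn) 0 : 'cV[C]_n).
have := psd (U *m d).
have -> : ((U *m d)^t* *m Qs *m (U *m d)) 0 0 = ip (U *m d) (Qs *m (U *m d)).
  by rewrite /ip -mulmxA.
rewrite eQs -!mulmxA (mulmxA (U^t*) U d) unitary_tl // mul1mx.
rewrite (ip_mul U) mulmxA unitary_tl // mul1mx /rdiag diag_delta ipZr -nn_ip nn_delta.
by rewrite mulr1 mxE ler0c.
Qed.

Lemma delta_le (lam : nat -> R) r : delta_star lam r <= lam r.-1.
Proof.
rewrite /delta_star; elim/big_rec: _ => // i x _ hx.
by rewrite ge_min hx orbT.
Qed.

End S.

Theorem lemma12 :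
  exists K : nat,
  forall (R : realType) (n rs r : nat) (Qs H V W : 'M[R[i]%C]_n)
    (lam sigma : nat -> R),
  psdmx Qs -> \rank Qs = rs -> eigen_seq Qs lam ->
  H \is hermsymmx ->
  (1 <= r <= n)%N ->
  svd (Qs + H) V W sigma ->
  0 < delta_star lam r ->
  spnorm (Qs - trunc_r V sigma r) <=
    K%:R * (lam r + lam 0%N / delta_star lam r * spnorm H).
Proof.
exists 5%N => R n rs r Qs H V W lam sigma hpsd _ heig hH /andP[r1 rn]
  [hV [hW [sg0 [sgmono eQ]]]] dpos.
have [hQs psd] := hpsd.
have [[U [hU eQs]] [lmono lzero]] := heig.
have n0 : (0 < n)%N by apply: leq_trans rn.
set eps := spnorm H.
have hb : forall x, nn (H *m x) <= ((eps%:C)%C) ^+ 2 * nn x := spnorm_nn H.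
have e0 : 0 <= eps.
  apply: le_trans (vnorm_ge0 (H *m delta_mx (Ordinal n0) 0)) (spnorm_ge H _).
  by apply: nn1_vnorm; exact: nn_delta.
have e0' : 0 <= ((eps%:C)%C : R[i]) by rewrite ler0c.
set dd := \row_i ((sigma i)%:C)%C : 'rV[R[i]]_n.
have dd0 : forall k : 'I_n, 0 <= dd 0 k by move=> k; rewrite mxE ler0c sg0.
set D := diag_mx dd.
have eD : rdiag sigma = D by [].
set Q := Qs + H.
have hQ : Q \is hermsymmx by apply: hermD.
have eQ' : Q = W *m D *m V^t*.
  by rewrite -(herm_tC hQ) /Q eQ !trC_mul trmxCK rdiag_tC mulmxA.
pose S := V^t* *m Q *m V.
have VV := unitary_tr hV; have VtV := unitary_tl hV.
have WtW := unitary_tl hW.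
have SH : S \is hermsymmx.
  by apply: tC_herm; rewrite /S !trC_mul trmxCK (herm_tC hQ) mulmxA.
have SS : S *m S = D *m D.
  have QQ : Q *m Q = V *m (D *m D) *m V^t*.
    have eQ2 : Q = V *m D *m W^t* by rewrite /Q eQ.
    rewrite {1}eQ2 eQ' -!mulmxA (mulmxA (W^t*) W) WtW mul1mx.
    by rewrite !mulmxA.
  rewrite /S -!mulmxA (mulmxA V) VV mul1mx (mulmxA Q Q V) QQ.
  by rewrite -!mulmxA VtV mulmx1 !mulmxA VtV mul1mx.
have hneg := hneg_lemma hV hQs hH psd hb e0'.
have kb := key SH dd0 e0' SS hneg.
have lam0 := psd_lam hpsd heig.
have lamr0 : 0 <= lam r.
  by case: (ltnP r n) => h; [exact: lam0 | rewrite lzero].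
pose al : R := 2%:R * (lam r ^+ 2 + eps ^+ 2).
have sgr : forall k : 'I_n, (r <= k)%N -> (((sigma k) ^+ 2)%:C)%C <= ((al%:C)%C : R[i]).
  move=> k rk.
  have rn' : (r < n)%N by apply: leq_ltn_trans rk _.
  pose r' := Ordinal rn'.
  pose lamv := \row_(i < n) ((lam i)%:C)%C : 'rV[R[i]]_n.
  have hw := weyl (r := r') (Q := Q) (lamv := lamv) (sg := dd) (e := (eps%:C)%C)
     hU hV hW eQs eQ' erefl.
  have hlam : forall k0 : 'I_n, (r' <= k0)%N -> `|lamv 0 k0| <= `|lamv 0 r'|.
    move=> k0 h; rewrite !mxE !ger0_norm ?ler0c ?lam0 // lecR.
    by apply: lmono; rewrite h /=.
  have hsg : forall k0 : 'I_n, (k0 <= r')%N -> `|dd 0 r'| <= `|dd 0 k0|.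
    move=> k0 h; rewrite !mxE !ger0_norm ?ler0c ?sg0 // lecR.
    by apply: sgmono; rewrite h /=.
  have hw' := hw hlam hsg hb.
  rewrite !mxE !ger0_norm ?ler0c ?lam0 ?sg0 // in hw'.
  have h1 : sigma r ^+ 2 <= al.
    move: hw'; rewrite /al -!rmorphXn -rmorphD -(rmorph_nat (real_complex R)).
    by rewrite -rmorphM lecR.
  rewrite lecR; apply: le_trans h1.
  rewrite lerXn2r ?nnegrE ?sg0 //; apply: sgmono; rewrite rk /=.
  done.
have hVt : V^t* \is unitarymx by rewrite trmxC_unitary.
have VSV : V *m S *m V^t* = Q.
  by rewrite /S !mulmxA VV mul1mx -mulmxA VV mulmx1.
have main : forall u : 'cV[R[i]]_n, vnorm u = 1 ->
    vnorm ((Qs - trunc_r V sigma r) *m u) <= 5%:R * (lam r + eps).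
  move=> u hu.
  set x := V^t* *m u.
  have nu := vnorm1_nn hu.
  have nx : nn x = 1 by rewrite /x nn_unitary.
  pose ddr := \row_(i < n) (((if (i < r)%N then sigma i else 0))%:C)%C : 'rV[R[i]]_n.
  pose Dr := diag_mx ddr.
  have eT : (Qs - trunc_r V sigma r) *m u =
      V *m ((D - Dr) *m x) - V *m ((D - S) *m x) - H *m u.
    have eM : Qs - trunc_r V sigma r = V *m (D - Dr) *m V^t* - V *m (D - S) *m V^t* - H.
      rewrite -mulmxBl -mulmxBr.
      have -> : (D - Dr) - (D - S) = S - Dr by rewrite opprB addrC addrA subrK.
      rewrite mulmxBr mulmxBl VSV /Q.
      by rewrite addrAC addrK.
    by rewrite eM /x; do 4!rewrite ?mulmxBl ?mulmxBr ?mulmxA.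
  have ha : nn ((D - Dr) *m x) <= ((al%:C)%C : R[i]).
    have -> : D - Dr = diag_mx (dd - ddr) by rewrite linearB.
    rewrite nn_diag -[X in _ <= X]mulr1 -nx nnE mulr_sumr; apply: ler_sum => k _.
    apply: ler_wpM2r; first exact: exprn_ge0.
    rewrite !mxE; case: (ltnP k r) => kr.
      rewrite subrr normr0 expr0n /= ler0c /al mulr_ge0 ?ler0n //.
      by rewrite addr_ge0 ?sqr_ge0.
    by rewrite rmorph0 subr0 ger0_norm ?ler0c ?sg0 // -rmorphXn sgr.
  have hb2 : nn ((D - S) *m x) <= (((4%:R * eps ^+ 2)%:C)%C : R[i]).
    have := kb x; rewrite nx mulr1 rmorphM rmorphXn /=.
    by rewrite (rmorph_nat (real_complex R)).
  have hc : nn (H *m u) <= (((eps ^+ 2)%:C)%C : R[i]).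
    by have := hb u; rewrite nu mulr1 rmorphXn.
  rewrite eT; apply: nn_le_vnorm.
    by rewrite mulr_ge0 ?ler0n // addr_ge0.
  have h1 := nnD2 (V *m ((D - Dr) *m x)) (- (V *m ((D - S) *m x) + H *m u)).
  have h2 := nnD2 (V *m ((D - S) *m x)) (H *m u).
  rewrite nnN !(nn_unitary _ hV) in h1 h2.
  rewrite -addrA -opprD; apply: le_trans h1 _.
  apply: le_trans (lerD (ler_wpM2l (ler0n _ 2) ha) (ler_wpM2l (ler0n _ 2) h2)) _.
  apply: le_trans (lerD (lexx _) (ler_wpM2l (ler0n _ 2)
     (lerD (ler_wpM2l (ler0n _ 2) hb2) (ler_wpM2l (ler0n _ 2) hc)))) _.
  rewrite -!(rmorph_nat (real_complex R)) -!rmorphM -!rmorphD -!rmorphM -!rmorphD lecR /al.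
  nra.
apply: le_trans (spnorm_le n0 main) _.
rewrite ler_wpM2l ?ler0n // lerD2l.
have h1 : 1 <= lam 0%N / delta_star lam r.
  rewrite ler_pdivlMr // mul1r; apply: le_trans (delta_le lam r) _.
  apply: lmono; rewrite leq0n /=.
  by rewrite (leq_trans _ rn) // ltn_predL.
by rewrite -[X in X <= _]mul1r ler_wpM2r.
Qed.
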